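(* For all integers $n,k$ with $n\ge 4$ and $1\le k<n$, the Johnson graph $J(n,k)$ is paired 2-coverable.
   Context: Let $[n]=\{1,2,\dots,n\}$. The Johnson graph $J(n,k)$ ($0\le k\le n$) has as vertices the $k$-element subsets of $[n]$, two vertices being adjacent if and only if the corresponding subsets have exactly $k-1$ elements in common. A graph $G$ is \emph{paired 2-coverable} if for any four distinct vertices $u,v,x,y$ of $G$ there exist two vertex-disjoint paths $P$ and $Q$ in $G$ such that $P$ has endpoints $u$ and $v$, $Q$ has endpoints $x$ and $y$, and $V(P)\cup V(Q)=V(G)$. *)

(* Defs.v *)
From mathcomp Require Import all_boot all_order.
Set Implicit Arguments. Unset Strict Implicit. Unset Printing Implicit Defensive.

Definition is_path_between (T : finType) (adj : rel T) (p : seq T) (u v : T) :=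
  [/\ p != [::], head u p = u, last u p = v, uniq p & path adj u (behead p)].

Definition paired_2_coverable (T : finType) (adj : rel T) :=
  forall u v x y : T, uniq [:: u; v; x; y] ->
    exists P Q : seq T,
      [/\ is_path_between adj P u v, is_path_between adj Q x y,
          [disjoint P & Q] & forall w : T, (w \in P) || (w \in Q)].

Definition johnson_vertex (n k : nat) := {A : {set 'I_n} | #|A| == k}.

Definition johnson_adj (n k : nat) : rel (johnson_vertex n k) :=
  fun A B => #|val A :&: val B| == k.-1.
Arguments johnson_adj : clear implicits.

(* Main.v *)
Require Import Defs.
From mathcomp Require Import all_boot all_order zify.
Set Implicit Arguments. Unset Strict Implicit. Unset Printing Implicit Defensive.

Lemma ipb_cons (T : finType) (adj : rel T) u p' v :
  is_path_between adj (u :: p') u v <-> [/\ last u p' = v, uniq (u :: p') & path adj u p'].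
Proof. rewrite /is_path_between /=; by split; [case=> _ _ -> -> -> | case=> -> -> ->]. Qed.

Lemma ipb_head (T : finType) (adj : rel T) p u v :
  is_path_between adj p u v -> exists p', p = u :: p'.
Proof. by case: p => [[]//|a p [] _ /= -> _ _ _]; exists p. Qed.

Lemma ipb1 (T : finType) (adj : rel T) u : is_path_between adj [:: u] u u.
Proof. by apply/ipb_cons. Qed.

Lemma ipb_cat (T : finType) (adj : rel T) p q u a b v :
  is_path_between adj p u a -> is_path_between adj q b v -> adj a b ->
  [disjoint p & q] -> is_path_between adj (p ++ q) u v.
Proof.
move=> Hp Hq ab dpq.
case: (ipb_head Hp) => p' ep; case: (ipb_head Hq) => q' eq; subst p q.
move/ipb_cons: Hp => [lp up pp]; move/ipb_cons: Hq => [lq uq pq].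
rewrite cat_cons; apply/ipb_cons; split.
- by rewrite last_cat /=.
- rewrite -cat_cons cat_uniq up uq /= andbT.
  by move: dpq; rewrite disjoint_sym disjoint_has.
- by rewrite cat_path pp lp /= ab pq.
Qed.

Lemma ipb_rev (T : finType) (adj : rel T) p u v :
  symmetric adj -> is_path_between adj p u v -> is_path_between adj (rev p) v u.
Proof.
move=> sym Hp; case: (ipb_head Hp) => p' ep; subst p.
move/ipb_cons: Hp => [lp up pp].
rewrite lastI rev_rcons lp; apply/ipb_cons; split.
- by case: p' lp {up pp} => [/= ->|a s _] //=; rewrite rev_cons last_rcons.
- by rewrite -lp -rev_rcons rev_uniq -lastI.
- rewrite -lp rev_path; rewrite (eq_path (e' := adj)) // => x y; exact: sym.
Qed.

Lemma disjP (T : finType) (A B : {pred T}) :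
  reflect (forall x, x \in A -> x \in B -> False) [disjoint A & B].
Proof.
apply: (iffP pred0P) => H x.
- by move=> xA xB; move: (H x); rewrite /= xA xB.
- by apply/negbTE/andP => -[xA xB]; apply: (H x).
Qed.

Lemma disjF (T : finType) (A B : {pred T}) x :
  [disjoint A & B] -> x \in A -> x \in B -> False.
Proof. by move/disjP; apply. Qed.

Definition sol (T : finType) (adj : rel T) (W : {set T}) (u v x y : T) :=
  exists P Q : seq T, [/\ is_path_between adj P u v, is_path_between adj Q x y,
    [disjoint P & Q] & forall w, (w \in P) || (w \in Q) = (w \in W)].

Definition HCo (T : finType) (adj : rel T) (W : {set T}) :=
  forall u v, u \in W -> v \in W -> u != v ->
  exists p, is_path_between adj p u v /\ forall w, (w \in p) = (w \in W).

Definition P2o (T : finType) (adj : rel T) (W : {set T}) :=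
  forall u v x y, u \in W -> v \in W -> x \in W -> y \in W ->
  uniq [:: u; v; x; y] -> sol adj W u v x y.

Definition xnb (T : finType) (adj : rel T) (V1 V2 : {set T}) :=
  forall w, w \in V1 -> forall y, exists2 z, z \in V2 & (z != y) && adj w z.

Definition mprop (T : finType) (adj : rel T) (V1 V2 : {set T}) :=
  forall u x v y, u \in V1 -> x \in V1 -> v \in V2 -> y \in V2 -> u != x -> v != y ->
  exists w1 w2 z1 z2, [/\ [&& w1 \in V1, w2 \in V1, z1 \in V2 & z2 \in V2],
     uniq [:: u; x; w1; w2], uniq [:: v; y; z1; z2], adj w1 z1 & adj w2 z2].

Lemma sol_revl (T : finType) (adj : rel T) W u v x y :
  symmetric adj -> sol adj W u v x y -> sol adj W v u x y.
Proof.
move=> sym [P [Q [hP hQ d c]]]; exists (rev P), Q; split => //.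
- exact: ipb_rev.
- by apply/disjP => w; rewrite mem_rev; move/disjP: d; apply.
- by move=> w; rewrite mem_rev.
Qed.

Lemma sol_swap (T : finType) (adj : rel T) W u v x y :
  sol adj W u v x y -> sol adj W x y u v.
Proof.
move=> [P [Q [hP hQ d c]]]; exists Q, P; split => //.
- by rewrite disjoint_sym.
- by move=> w; rewrite orbC.
Qed.

Lemma sol_revr (T : finType) (adj : rel T) W u v x y :
  symmetric adj -> sol adj W u v x y -> sol adj W u v y x.
Proof. by move=> sym /sol_swap /(sol_revl sym) /sol_swap. Qed.

Lemma mprop_sym (T : finType) (adj : rel T) V1 V2 :
  symmetric adj -> mprop adj V1 V2 -> mprop adj V2 V1.
Proof.
move=> sym hm u x v y uV xV vV yV ux vy.
case: (hm v y u x vV yV uV xV vy ux) => w1 [w2 [z1 [z2 [/and4P [? ? ? ?] h1 h2 a1 a2]]]].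
exists z1, z2, w1, w2; split => //; first by apply/and4P.
- by rewrite sym. - by rewrite sym.
Qed.

Lemma cov_l (T : finType) (P Q : seq T) (W : {set T}) w :
  (forall w, (w \in P) || (w \in Q) = (w \in W)) -> w \in P -> w \in W.
Proof. by move=> c wP; rewrite -c wP. Qed.

Lemma cov_r (T : finType) (P Q : seq T) (W : {set T}) w :
  (forall w, (w \in P) || (w \in Q) = (w \in W)) -> w \in Q -> w \in W.
Proof. by move=> c wQ; rewrite -c wQ orbT. Qed.

Lemma dis12 (T : finType) (V1 V2 : {set T}) w :
  [disjoint V1 & V2] -> w \in V1 -> w \in V2 -> False.
Proof. by move/disjP; apply. Qed.

Lemma ipb_split (T : finType) (adj : rel T) P u v :
  is_path_between adj P u v -> u != v ->
  exists p1 p2, [/\ P = u :: p1 :: p2, adj u p1 & is_path_between adj (p1 :: p2) p1 v].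
Proof.
move=> hP uv; case: (ipb_head hP) => p' eP; subst P.
move/ipb_cons: hP => [lp up pp]; case: p' lp up pp => [/= e|p1 p2 lp up pp].
  by rewrite e eqxx in uv.
exists p1, p2; move: pp => /= /andP [a pp]; split => //.
apply/ipb_cons; split => //; by case/andP: up.
Qed.

Lemma absorb (T : finType) (adj : rel T) (V1 V2 : {set T}) P u v :
  symmetric adj -> [disjoint V1 & V2] -> HCo adj V2 -> xnb adj V1 V2 ->
  is_path_between adj P u v -> u != v -> {subset P <= V1} ->
  exists P', is_path_between adj P' u v /\ forall w, (w \in P') = (w \in P) || (w \in V2).
Proof.
move=> sym dV hHC hx hP uv sub.
case: (ipb_split hP uv) => p1 [p2 [eP a1 hp]]; subst P.
have uV : u \in V1 by apply: sub; rewrite inE eqxx.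
have p1V : p1 \in V1 by apply: sub; rewrite !inE eqxx orbT.
case: (hx u uV u) => z zV /andP [_ uz].
case: (hx p1 p1V z) => z' z'V /andP [zz' p1z'].
have zz2 : z != z' by rewrite eq_sym.
case: (hHC z z' zV z'V zz2) => R [hR cR].
have up : u \notin p1 :: p2 by case/ipb_cons: hP => _ /andP [].
exists (u :: R ++ p1 :: p2); split.
- apply: (ipb_cat (ipb1 _ u) _ uz).
    apply: (ipb_cat hR hp); first by rewrite sym.
    apply/disjP => w; rewrite cR => wV2 wp.
    by apply: (dis12 dV _ wV2); apply: sub; rewrite inE wp orbT.
  apply/disjP => w; rewrite inE => /eqP -> {w}; rewrite mem_cat cR => /orP [uV2|].
    exact: (dis12 dV uV uV2).
  by apply/negP.
- move=> w; rewrite !(inE, mem_cat) cR.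
  by case: (w == u); case: (w == p1); case: (w \in p2); case: (w \in V2).
Qed.

Inductive and6 (P1 P2 P3 P4 P5 P6 : Prop) : Prop := And6 of P1 & P2 & P3 & P4 & P5 & P6.
Lemma uniq4E (T : eqType) (a b c d : T) :
  uniq [:: a; b; c; d] -> and6 (a != b) (a != c) (a != d) (b != c) (b != d) (c != d).
Proof. by rewrite /= !inE !negb_or => /and4P [/and3P [? ? ?] /andP [? ?] ? _]. Qed.
Lemma uniq4I (T : eqType) (a b c d : T) :
  a != b -> a != c -> a != d -> b != c -> b != d -> c != d -> uniq [:: a; b; c; d].
Proof. by move=> ab ac ad bc bd cd; rewrite /= !inE !negb_or ab ac ad bc bd cd. Qed.

Lemma pick_out (T : finType) (V : {set T}) (S : seq T) :
  size S < #|V| -> exists2 w, w \in V & w \notin S.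
Proof.
move=> lt; case/boolP: [exists (w | w \in V), w \notin S] => [/exists_inP [w wV wS]|/exists_inPn H].
  by exists w.
have : V \subset [pred x | x \in S] by apply/subsetP => w /H; rewrite negbK.
move/subset_leq_card => le; have := leq_trans le (card_size S).
by rewrite leqNgt lt.
Qed.

Lemma caseA (T : finType) (adj : rel T) (V1 V2 : {set T}) u v x y :
  symmetric adj -> [disjoint V1 & V2] -> P2o adj V1 -> HCo adj V2 -> xnb adj V1 V2 ->
  u \in V1 -> v \in V1 -> x \in V1 -> y \in V1 -> uniq [:: u; v; x; y] ->
  sol adj (V1 :|: V2) u v x y.
Proof.
move=> sym dV hP2 hHC hx uV vV xV yV uq.
case: (hP2 u v x y uV vV xV yV uq) => P [Q [hP hQ d c]].
have uv : u != v by case/uniq4E: uq.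
case: (absorb sym dV hHC hx hP uv (fun w => cov_l c)) => P' [hP' cP'].
exists P', Q; split => //.
- apply/disjP => w; rewrite cP' => /orP [wP wQ|wV2 wQ].
    exact: (disjF d wP wQ).
  exact: (dis12 dV (cov_r c wQ) wV2).
- by move=> w; rewrite cP' in_setU -c; case: (w \in P); case: (w \in Q); case: (w \in V2).
Qed.

Lemma caseB (T : finType) (adj : rel T) (V1 V2 : {set T}) u v x y :
  [disjoint V1 & V2] -> P2o adj V1 -> HCo adj V2 -> xnb adj V1 V2 -> 4 <= #|V1| ->
  u \in V1 -> v \in V1 -> x \in V1 -> y \in V2 -> uniq [:: u; v; x; y] ->
  sol adj (V1 :|: V2) u v x y.
Proof.
move=> dV hP2 hHC hx s1 uV vV xV yV uq.
case: (@pick_out _ V1 [:: u; v; x]) => // w wV1 wn.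
case: (hx w wV1 y) => z zV2 /andP [zy wz].
have uq' : uniq [:: u; v; x; w].
  case/uniq4E: uq => *; move: wn; rewrite !inE !negb_or => /and3P [*].
  by apply: uniq4I => //; rewrite eq_sym.
case: (hP2 u v x w uV vV xV wV1 uq') => P [Q [hP hQ d c]].
case: (hHC z y zV2 yV zy) => R [hR cR].
exists P, (Q ++ R); split => //.
- apply: (ipb_cat hQ hR wz); apply/disjP => a aQ; rewrite cR.
  exact: (dis12 dV (cov_r c aQ)).
- apply/disjP => a aP; rewrite mem_cat cR => /orP [aQ|aV2].
    exact: (disjF d aP aQ).
  exact: (dis12 dV (cov_l c aP) aV2).
- by move=> a; rewrite mem_cat cR orbA c in_setU.
Qed.

Lemma caseC1 (T : finType) (adj : rel T) (V1 V2 : {set T}) u v x y :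
  [disjoint V1 & V2] -> HCo adj V1 -> HCo adj V2 ->
  u \in V1 -> v \in V1 -> x \in V2 -> y \in V2 -> uniq [:: u; v; x; y] ->
  sol adj (V1 :|: V2) u v x y.
Proof.
move=> dV h1 h2 uV vV xV yV uq; case/uniq4E: uq => uv _ _ _ _ xy.
case: (h1 u v uV vV uv) => P [hP cP]; case: (h2 x y xV yV xy) => Q [hQ cQ].
exists P, Q; split => //.
- by apply/disjP => a; rewrite cP cQ; apply: dis12.
- by move=> a; rewrite cP cQ in_setU.
Qed.

Lemma caseC2 (T : finType) (adj : rel T) (V1 V2 : {set T}) u v x y :
  [disjoint V1 & V2] -> P2o adj V1 -> P2o adj V2 -> mprop adj V1 V2 ->
  u \in V1 -> v \in V2 -> x \in V1 -> y \in V2 -> uniq [:: u; v; x; y] ->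
  sol adj (V1 :|: V2) u v x y.
Proof.
move=> dV h1 h2 hm uV vV xV yV uq; have [_ ux _ _ vy _] := uniq4E uq.
case: (hm u x v y uV xV vV yV ux vy) =>
  w1 [w2 [z1 [z2 [/and4P [w1V w2V z1V z2V] uw vz a1 a2]]]].
have uw' : uniq [:: u; w1; x; w2].
  by case/uniq4E: uw => *; apply: uniq4I => //; rewrite eq_sym.
have vz' : uniq [:: z1; v; z2; y].
  by case/uniq4E: vz => *; apply: uniq4I => //; rewrite eq_sym.
case: (h1 u w1 x w2 uV w1V xV w2V uw') => P1 [Q1 [hP1 hQ1 d1 c1]].
case: (h2 z1 v z2 y z1V vV z2V yV vz') => P2 [Q2 [hP2 hQ2 d2 c2]].
have X12 : forall (A B : seq T) a, (forall w, w \in A -> w \in V1) ->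
    (forall w, w \in B -> w \in V2) -> a \in A -> a \in B -> False.
  by move=> A B a hA hB aA aB; exact: (dis12 dV (hA _ aA) (hB _ aB)).
exists (P1 ++ P2), (Q1 ++ Q2); split.
- apply: (ipb_cat hP1 hP2 a1); apply/disjP => a; apply: X12 => w; [exact: cov_l c1|exact: cov_l c2].
- apply: (ipb_cat hQ1 hQ2 a2); apply/disjP => a; apply: X12 => w; [exact: cov_r c1|exact: cov_r c2].
- apply/disjP => a; rewrite !mem_cat => /orP [aP1|aP2] /orP [aQ1|aQ2].
  + exact: (disjF d1 aP1 aQ1).
  + by apply: (X12 P1 Q2 a) => // w; [exact: cov_l c1|exact: cov_r c2].
  + by apply: (X12 Q1 P2 a) => // w; [exact: cov_r c1|exact: cov_l c2].
  + exact: (disjF d2 aP2 aQ2).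
- move=> a; rewrite !mem_cat in_setU -c1 -c2.
  by case: (a \in P1); case: (a \in P2); case: (a \in Q1); case: (a \in Q2).
Qed.

Lemma hc_cross (T : finType) (adj : rel T) (V1 V2 : {set T}) u v :
  symmetric adj -> [disjoint V1 & V2] -> HCo adj V1 -> HCo adj V2 -> xnb adj V2 V1 ->
  1 < #|V2| -> u \in V1 -> v \in V2 ->
  exists p, is_path_between adj p u v /\ forall w, (w \in p) = (w \in V1 :|: V2).
Proof.
move=> sym dV h1 h2 hx s2 uV vV.
case: (@pick_out _ V2 [:: v]) => // z zV; rewrite inE => zv.
case: (hx z zV u) => w wV /andP [wu zw].
case: (h1 u w uV wV); first by rewrite eq_sym.
move=> p [hp cp]; case: (h2 z v zV vV zv) => q [hq cq].
exists (p ++ q); split.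
- apply: (ipb_cat hp hq); first by rewrite sym.
  by apply/disjP => a; rewrite cp cq; apply: dis12.
- by move=> a; rewrite mem_cat cp cq in_setU.
Qed.

Ltac u4 uq := case/uniq4E: uq => *; apply: uniq4I => //; by rewrite eq_sym.

Lemma join (T : finType) (adj : rel T) (V1 V2 : {set T}) :
  symmetric adj -> [disjoint V1 & V2] -> HCo adj V1 -> P2o adj V1 -> HCo adj V2 -> P2o adj V2 ->
  4 <= #|V1| -> 4 <= #|V2| -> xnb adj V1 V2 -> xnb adj V2 V1 -> mprop adj V1 V2 ->
  HCo adj (V1 :|: V2) /\ P2o adj (V1 :|: V2).
Proof.
move=> sym dV h1 p1 h2 p2 s1 s2 x12 x21 hm.
have dV' : [disjoint V2 & V1] by rewrite disjoint_sym.
have hm' := mprop_sym sym hm.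
have s1' : 1 < #|V1| by apply: leq_trans s1.
have s2' : 1 < #|V2| by apply: leq_trans s2.
split.
- move=> u v; rewrite !in_setU => /orP [uV|uV] /orP [vV|vV] uv.
  + case: (h1 u v uV vV uv) => p [hp cp].
    case: (absorb sym dV h2 x12 hp uv) => [w|p' [hp' cp']]; first by rewrite cp.
    by exists p'; split => // w; rewrite cp' cp in_setU.
  + exact: hc_cross.
  + case: (hc_cross sym dV h1 h2 x21 s2' vV uV) => p [hp cp].
    by exists (rev p); split; [exact: ipb_rev|move=> w; rewrite mem_rev].
  + case: (h2 u v uV vV uv) => p [hp cp].
    case: (absorb sym dV' h1 x21 hp uv) => [w|p' [hp' cp']]; first by rewrite cp.
    by exists p'; split => // w; rewrite cp' cp in_setU orbC.
- move=> u v x y; rewrite !in_setU => hu hv hx hy uq.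
  case/orP: hu => u1; case/orP: hv => v1; case/orP: hx => x1; case/orP: hy => y1.
  + exact: caseA.
  + exact: caseB.
  + by apply: sol_revr => //; apply: caseB => //; u4 uq.
  + by apply: caseC1.
  + by apply: sol_swap; apply: caseB => //; u4 uq.
  + by apply: caseC2.
  + by apply: sol_revr => //; apply: caseC2 => //; u4 uq.
  + by rewrite setUC; apply: sol_swap; apply: sol_revr => //; apply: caseB => //; u4 uq.
  + by apply: sol_swap; apply: sol_revr => //; apply: caseB => //; u4 uq.
  + by apply: sol_revl => //; apply: caseC2 => //; u4 uq.
  + by apply: sol_revl => //; apply: sol_revr => //; apply: caseC2 => //; u4 uq.
  + by rewrite setUC; apply: sol_swap; apply: caseB => //; u4 uq.
  + by rewrite setUC; apply: caseC1.
  + by rewrite setUC; apply: sol_revr => //; apply: caseB => //; u4 uq.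
  + by rewrite setUC; apply: caseB.
  + by rewrite setUC; apply: caseA.
Qed.

Lemma setD2_big (T : finType) (N : {set T}) (u x : T) :
  u != x -> 3 <= #|N| -> #|N :\: [set u; x]| <= 1 -> (u \in N) && (x \in N).
Proof.
move=> ux h3 h1.
have hI : 2 <= #|N :&: [set u; x]|.
  have := cardsID [set u; x] N; lia.
have : N :&: [set u; x] == [set u; x].
  by rewrite eqEcard subsetIr cards2 ux.
move/eqP => e; apply/andP; split.
- have : u \in N :&: [set u; x] by rewrite e !inE eqxx.
  by rewrite inE => /andP [].
- have : x \in N :&: [set u; x] by rewrite e !inE eqxx orbT.
  by rewrite inE => /andP [].
Qed.

Lemma setD2_pos (T : finType) (N : {set T}) (u x : T) :
  3 <= #|N| -> 0 < #|N :\: [set u; x]|.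
Proof.
move=> h3; have := cardsID [set u; x] N.
have : #|N :&: [set u; x]| <= 2.
  apply: leq_trans (subset_leq_card (subsetIr _ _)) _; rewrite cards2; by case: (u != x).
lia.
Qed.

Lemma mprop_of (T : finType) (adj : rel T) (V1 V2 : {set T}) :
  symmetric adj ->
  (forall z, z \in V2 -> 3 <= #|[set w in V1 | adj z w]|) ->
  (forall z1 z2 w w', z1 \in V2 -> z2 \in V2 -> z1 != z2 -> w \in V1 -> w' \in V1 ->
     adj z1 w -> adj z2 w -> adj z1 w' -> adj z2 w' -> w = w') ->
  4 <= #|V2| -> mprop adj V1 V2.
Proof.
move=> sym hd hc s2 u x v y uV xV vV yV ux vy.
case: (@pick_out _ V2 [:: v; y]) => [|z1 z1V]; first by apply: leq_trans s2.
rewrite !inE negb_or => /andP [z1v z1y].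
case: (@pick_out _ V2 [:: v; y; z1]) => [|z2 z2V]; first by apply: leq_trans s2.
rewrite !inE !negb_or => /and3P [z2v z2y z2z1].
have [d1 d2] := (hd z1 z1V, hd z2 z2V).
set N1 := [set w in V1 | adj z1 w] in d1 *.
set N2 := [set w in V1 | adj z2 w] in d2 *.
have memA : forall z w, w \in [set w in V1 | adj z w] :\: [set u; x] ->
    [/\ w \in V1, adj w z, w != u & w != x].
  by move=> z w; rewrite !inE negb_or sym => /andP [/andP [? ?] /andP [? ?]].
have fin : forall w1 w2, w1 \in N1 :\: [set u; x] -> w2 \in N2 :\: [set u; x] -> w2 != w1 ->
  exists w1 w2 z1 z2, [/\ [&& w1 \in V1, w2 \in V1, z1 \in V2 & z2 \in V2],
     uniq [:: u; x; w1; w2], uniq [:: v; y; z1; z2], adj w1 z1 & adj w2 z2].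
  move=> w1 w2 /memA [w1V a1 w1u w1x] /memA [w2V a2 w2u w2x] w21.
  exists w1, w2, z1, z2; split => //.
  - by rewrite w1V w2V z1V z2V.
  - by apply: uniq4I => //; rewrite eq_sym.
  - by apply: uniq4I => //; rewrite eq_sym.
case: (leqP 2 #|N2 :\: [set u; x]|) => h2.
  case: (@pick_out _ (N1 :\: [set u; x]) [::]) => [|w1 w1A _]; first exact: setD2_pos.
  case: (@pick_out _ (N2 :\: [set u; x]) [:: w1]) => // w2 w2A; rewrite inE => w21.
  exact: (fin w1 w2).
case: (leqP 2 #|N1 :\: [set u; x]|) => h1.
  case: (@pick_out _ (N2 :\: [set u; x]) [::]) => [|w2 w2A _]; first exact: setD2_pos.
  case: (@pick_out _ (N1 :\: [set u; x]) [:: w2]) => // w1 w1A; rewrite inE => w12.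
  by apply: (fin w1 w2) => //; rewrite eq_sym.
have /andP [uN1 xN1] := setD2_big ux d1 h1.
have /andP [uN2 xN2] := setD2_big ux d2 h2.
move: uN1 xN1 uN2 xN2; rewrite !inE => /andP [_ a1] /andP [_ a2] /andP [_ a3] /andP [_ a4].
have z12 : z1 != z2 by rewrite eq_sym.
by move: ux; rewrite (hc z1 z2 u x z1V z2V z12 uV xV a1 a3 a2 a4) eqxx.
Qed.

Definition comat (T : finType) (adj : rel T) (V : {set T}) :=
  forall w z z', w \in V -> z \in V -> z' \in V -> w != z -> w != z' ->
  ~~ adj w z -> ~~ adj w z' -> z = z'.


Lemma ins_path (T : finType) (adj : rel T) u p1 p2 v r :
  is_path_between adj (u :: p1 :: p2) u v -> adj u r -> adj r p1 -> r \notin u :: p1 :: p2 ->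
  is_path_between adj (u :: r :: p1 :: p2) u v.
Proof.
move=> /ipb_cons [lp up pp] ur rp rn; apply/ipb_cons; split => //.
- have /andP [un us] := up.
  move: rn; rewrite in_cons negb_or => /andP [rneu rns].
  rewrite cons_uniq in_cons negb_or (eq_sym u r) rneu un cons_uniq rns; exact: us.
- by move: pp => /= /andP [_ ->]; rewrite ur rp.
Qed.

Lemma ins (T : finType) (adj : rel T) (W : {set T}) u v x y r :
  symmetric adj -> sol adj W u v x y -> u != v -> x != y -> r \notin W ->
  (forall z z', z \in W -> z' \in W -> ~~ adj r z -> ~~ adj r z' -> z = z') ->
  sol adj (r |: W) u v x y.
Proof.
move=> sym [P [Q [hP hQ d c]]] uv xy rW hu.
have [p1 [p2 [eP aP hP']]] := ipb_split hP uv.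
have [q1 [q2 [eQ aQ hQ']]] := ipb_split hQ xy.
subst P Q.
have rP : r \notin u :: p1 :: p2 by apply/negP => /(cov_l c); apply/negP.
have rQ : r \notin x :: q1 :: q2 by apply/negP => /(cov_r c); apply/negP.
case: (boolP (adj u r && adj r p1)) => [/andP [ur rp]|h1].
  exists (u :: r :: p1 :: p2), (x :: q1 :: q2); split => //.
  - exact: ins_path.
  - apply/disjP => w; rewrite in_cons => /orP [/eqP ->|]; first by apply: (disjF d); rewrite inE eqxx.
    rewrite in_cons => /orP [/eqP -> wQ|wp wQ]; first by move: rQ; rewrite wQ.
    by apply: (disjF d _ wQ); rewrite in_cons wp orbT.
  - move=> w; rewrite in_setU1 -c !in_cons.
    by case: (w == u); case: (w == r); case: (w == p1); case: (w \in p2);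
       case: (w == x); case: (w == q1); case: (w \in q2).
case: (boolP (adj x r && adj r q1)) => [/andP [xr rq]|h2].
  exists (u :: p1 :: p2), (x :: r :: q1 :: q2); split => //.
  - exact: ins_path.
  - apply/disjP => w wP; rewrite in_cons => /orP [/eqP wx|].
      by apply: (disjF d wP); rewrite wx inE eqxx.
    rewrite in_cons => /orP [/eqP wr|wq]; first by move: rP; rewrite -wr wP.
    by apply: (disjF d wP); rewrite in_cons wq orbT.
  - move=> w; rewrite in_setU1 -c !in_cons.
    by case: (w == u); case: (w == r); case: (w == p1); case: (w \in p2);
       case: (w == x); case: (w == q1); case: (w \in q2).
have [z1 [z1P nz1]] : exists z1, z1 \in u :: p1 :: p2 /\ ~~ adj r z1.
  by move: h1; rewrite negb_and sym => /orP [h|h]; [exists u | exists p1];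
     rewrite ?h !inE eqxx ?orbT.
have [z2 [z2Q nz2]] : exists z2, z2 \in x :: q1 :: q2 /\ ~~ adj r z2.
  by move: h2; rewrite negb_and sym => /orP [h|h]; [exists x | exists q1];
     rewrite ?h !inE eqxx ?orbT.
have e := hu z1 z2 (cov_l c z1P) (cov_r c z2Q) nz1 nz2.
by subst z2; case: (disjF d z1P z2Q).
Qed.

Lemma ins_seq (T : finType) (adj : rel T) (V : {set T}) u v x y :
  symmetric adj -> comat adj V -> u != v -> x != y ->
  forall s W, sol adj W u v x y -> W \subset V -> {subset s <= V} -> uniq s ->
  [disjoint s & W] -> sol adj (W :|: [set w in s]) u v x y.
Proof.
move=> sym cm uv xy; elim=> [|r s IH] W hW sub ss us ds.
  by have -> : W :|: [set w in [::]] = W by apply/setP => w; rewrite !inE orbF.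
have rW : r \notin W by apply/negP => rW; apply: (disjF ds _ rW); rewrite inE eqxx.
have rV : r \in V by apply: ss; rewrite inE eqxx.
have hW' : sol adj (r |: W) u v x y.
  apply: ins => // z z' zW z'W; apply: (cm r) => //; try exact: (subsetP sub).
  - by apply/eqP => e; subst; rewrite zW in rW.
  - by apply/eqP => e; subst; rewrite z'W in rW.
have -> : W :|: [set w in r :: s] = (r |: W) :|: [set w in s].
  by apply/setP => w; rewrite !inE; case: (w == r); case: (w \in W); case: (w \in s).
apply: IH => //.
- by apply/subsetP => w; rewrite in_setU1 => /orP [/eqP ->|/(subsetP sub)].
- by move=> w ws; apply: ss; rewrite inE ws orbT.
- by case/andP: us.
- apply/disjP => w ws; rewrite in_setU1 => /orP [/eqP e|wW].
    by subst; case/andP: us => /negP.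
  by apply: (disjF ds _ wW); rewrite inE ws orbT.
Qed.

Lemma pp (T : finType) (adj : rel T) (V : {set T}) (a b : T) (F : seq T) :
  symmetric adj -> comat adj V -> a \in V -> b \in V -> a != b -> a \in F -> b \in F ->
  (~~ adj a b -> size F < #|V|) ->
  exists p, [/\ is_path_between adj p a b, {subset p <= V}, size p <= 3 &
     forall w, w \in p -> w \in F -> (w == a) || (w == b)].
Proof.
move=> sym cm aV bV ab aF bF hs.
case: (boolP (adj a b)) => hab.
  exists [:: a; b]; split => //.
  - by apply/ipb_cons; split => //=; rewrite ?inE ?hab // ab.
  - by move=> w; rewrite !inE => /orP [/eqP ->|/eqP ->].
  - by move=> w; rewrite !inE.
case: (@pick_out _ V F (hs hab)) => r rV rF.
have ra : r != a by apply/eqP => e; subst; rewrite aF in rF.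
have rb : r != b by apply/eqP => e; subst; rewrite bF in rF.
have ar : adj a r.
  apply/negPn/negP => nar; have := cm a b r aV bV rV ab; rewrite eq_sym ra => /(_ isT hab nar) e.
  by subst; rewrite eqxx in rb.
have rb' : adj r b.
  apply/negPn/negP => nrb; have := cm b a r bV aV rV; rewrite eq_sym ab eq_sym rb sym hab.
  by rewrite sym in nrb; move=> /(_ isT isT isT nrb) e; subst; rewrite eqxx in ra.
exists [:: a; r; b]; split => //.
- apply/ipb_cons; split => //=; rewrite ?inE ?ar ?rb' //.
  by rewrite !negb_or ab (eq_sym a r) ra rb.
- by move=> w; rewrite !inE => /or3P [/eqP ->|/eqP ->|/eqP ->].
- move=> w; rewrite !inE => /or3P [/eqP ->|/eqP ->|/eqP ->]; rewrite ?eqxx ?orbT //.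
  by rewrite (negbTE rF).
Qed.

Lemma baseP2 (T : finType) (adj : rel T) (V : {set T}) :
  symmetric adj -> comat adj V ->
  ((forall w z, w \in V -> z \in V -> w != z -> adj w z) \/ 6 <= #|V|) -> P2o adj V.
Proof.
move=> sym cm big u v x y uV vV xV yV uq.
have [uv ux uy vx vy xy] := uniq4E uq.
have big6 : forall a b, a \in V -> b \in V -> a != b -> ~~ adj a b -> 6 <= #|V|.
  move=> a b aV bV ab nab; case: big => // hc; by rewrite (hc a b) in nab.
case: (@pp _ adj V u v [:: u; v; x; y] sym cm uV vV uv) => //; try by rewrite !inE eqxx ?orbT.
  move=> nuv; have := big6 u v uV vV uv nuv; rewrite /=; lia.
move=> P [hP PV sP Pp].
case: (@pp _ adj V x y (P ++ [:: x; y]) sym cm xV yV xy) => //; try by rewrite mem_cat !inE eqxx ?orbT.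
  move=> nxy; have := big6 x y xV yV xy nxy; rewrite size_cat /=; lia.
move=> Q [hQ QV sQ Qp].
set W0 := [set w | (w \in P) || (w \in Q)].
have dPQ : [disjoint P & Q].
  apply/disjP => w wP wQ.
  have wF : w \in P ++ [:: x; y] by rewrite mem_cat wP.
  have /orP [/eqP e|/eqP e] := Qp w wQ wF; subst w.
  + by have := Pp x wP; rewrite !inE eqxx !orbT => /(_ isT) /orP [] /eqP e; subst;
       rewrite eqxx in ux vx.
  + by have := Pp y wP; rewrite !inE eqxx !orbT => /(_ isT) /orP [] /eqP e; subst;
       rewrite eqxx in uy vy.
have s0 : sol adj W0 u v x y by exists P, Q; split => // w; rewrite inE.
have W0V : W0 \subset V by apply/subsetP => w; rewrite inE => /orP [/PV|/QV].
have := @ins_seq _ adj V u v x y sym cm uv xy (enum (V :\: W0)) W0 s0 W0V.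
have -> : W0 :|: [set w in enum (V :\: W0)] = V.
  apply/setP => w; rewrite !inE mem_enum !inE.
  case: (boolP ((w \in P) || (w \in Q))) => h //=.
  by rewrite (subsetP W0V w) // inE.
apply.
- by move=> w; rewrite mem_enum inE => /andP [].
- exact: enum_uniq.
- by apply/disjP => w; rewrite mem_enum inE => /andP [/negP].
Qed.

Lemma baseHC (T : finType) (adj : rel T) (V : {set T}) :
  symmetric adj -> comat adj V -> 4 <= #|V| ->
  ((forall w z, w \in V -> z \in V -> w != z -> adj w z) \/ 6 <= #|V|) -> HCo adj V.
Proof.
move=> sym cm s4 big u v uV vV uv.
have hP2 := baseP2 sym cm big.
case: (@pick_out _ V [:: u; v]) => [|a aV]; first by apply: leq_trans s4.
rewrite !inE negb_or => /andP [au av].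
have [b [bV bu bv ba ab]] : exists b, [/\ b \in V, b != u, b != v, b != a & adj a b].
  case: big => [hc|s6].
    case: (@pick_out _ V [:: u; v; a]) => // b bV.
    rewrite !inE !negb_or => /and3P [bu bv ba]; exists b; split => //.
    by apply: hc => //; rewrite eq_sym.
  case: (@pick_out _ V [:: u; v; a]) => [|b1 b1V]; first by apply: leq_trans s6.
  rewrite !inE !negb_or => /and3P [b1u b1v b1a].
  case: (@pick_out _ V [:: u; v; a; b1]) => [|b2 b2V]; first by apply: leq_trans s6.
  rewrite !inE !negb_or => /and4P [b2u b2v b2a b2b1].
  case: (boolP (adj a b1)) => h1; first by exists b1.
  case: (boolP (adj a b2)) => h2; first by exists b2.
  have := cm a b1 b2 aV b1V b2V; rewrite !(eq_sym a) b1a b2a => /(_ isT isT h1 h2) e.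
  by subst; rewrite eqxx in b2b1.
case: (hP2 u a b v uV aV bV vV) => [|P [Q [hP hQ d c]]].
  by apply: uniq4I => //; rewrite eq_sym.
exists (P ++ Q); split; first exact: (ipb_cat hP hQ ab).
by move=> w; rewrite mem_cat c.
Qed.

Definition VCD n k (C D : {set 'I_n}) : {set johnson_vertex n k} :=
  [set A : johnson_vertex n k | (C \subset val A) && (val A \subset D)].

Lemma jcard n k (A : johnson_vertex n k) : #|val A| = k.
Proof. exact/eqP/(valP A). Qed.

Lemma jsym n k : symmetric (johnson_adj n k).
Proof. by move=> A B; rewrite /johnson_adj setIC. Qed.

Lemma jadjE n k (A B : johnson_vertex n k) : johnson_adj n k A B = (#|val A :&: val B| == k.-1).
Proof. by []. Qed.

Lemma jdist n k (A B : johnson_vertex n k) : A != B -> #|val A :&: val B| < k.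
Proof.
move=> AB; rewrite ltnNge; apply/negP => h.
have e1 : val A :&: val B == val A by rewrite eqEcard subsetIl jcard.
have e2 : val A :&: val B == val B by rewrite eqEcard subsetIr jcard.
by move: AB; rewrite -val_eqE -(eqP e1) -{2}(eqP e2) eqxx.
Qed.

Lemma jval_inj n k (A B : johnson_vertex n k) : val A = val B -> A = B.
Proof. exact: val_inj. Qed.

Lemma inVCD n k C D (A : johnson_vertex n k) :
  (A \in VCD k C D) = (C \subset val A) && (val A \subset D).
Proof. by rewrite inE. Qed.

Lemma jdec n k (C D : {set 'I_n}) a :
  VCD k C D = VCD k C (D :\ a) :|: VCD k (a |: C) D.
Proof.
apply/setP => A; rewrite in_setU !inVCD subUset sub1set.
case: (boolP (a \in val A)) => aA /=.
  have -> : (val A \subset D :\ a) = false.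
    by apply/negP => /subsetP /(_ a aA); rewrite !inE eqxx.
  by rewrite andbF.
rewrite orbF; case: (C \subset val A) => //=.
apply/idP/idP => /subsetP h; apply/subsetP => w wA.
  by rewrite !inE h // andbT; apply/eqP => e; subst; rewrite wA in aA.
by have := h w wA; rewrite inE => /andP [].
Qed.

Lemma jdec_dis n k (C D : {set 'I_n}) a :
  [disjoint VCD k C (D :\ a) & VCD k (a |: C) D].
Proof.
apply/disjP => A; rewrite !inVCD => /andP [_ /subsetP h] /andP [/subsetP h' _].
by have := h a (h' a (setU11 _ _)); rewrite !inE eqxx.
Qed.

Lemma lt_pred m k : m < k -> m <= k.-1.
Proof. by case: k. Qed.

Lemma cardD1k n k (A : johnson_vertex n k) a : a \in val A -> #|val A :\ a| = k.-1.
Proof. move=> aA; have := cardsD1 a (val A); rewrite aA jcard /=; lia. Qed.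

Lemma cross_sub n k (A B : johnson_vertex n k) a :
  a \in val A -> a \notin val B -> johnson_adj n k A B -> val A :\ a \subset val B.
Proof.
move=> aA aB /eqP hc.
have e : val A :&: val B \subset val A :\ a.
  apply/subsetP => w; rewrite !inE => /andP [wA wB]; rewrite wA andbT.
  by apply/eqP => ew; subst; rewrite wB in aB.
have : val A :&: val B == val A :\ a by rewrite eqEcard e /= (cardD1k aA) hc.
by move/eqP <-; apply: subsetIr.
Qed.

Lemma aG2 n k C D a (A : johnson_vertex n k) : A \in VCD k (a |: C) D -> a \in val A.
Proof. by rewrite inVCD => /andP [/subsetP h _]; apply: h; rewrite setU11. Qed.

Lemma aG1 n k C D a (B : johnson_vertex n k) : B \in VCD k C (D :\ a) -> a \notin val B.
Proof. by rewrite inVCD => /andP [_ /subsetP h]; apply/negP => /h; rewrite !inE eqxx. Qed.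

Lemma cn1 n k C D a (B1 B2 A A' : johnson_vertex n k) :
  B1 \in VCD k C (D :\ a) -> B2 \in VCD k C (D :\ a) ->
  A \in VCD k (a |: C) D -> A' \in VCD k (a |: C) D -> B1 != B2 ->
  johnson_adj n k B1 A -> johnson_adj n k B2 A -> johnson_adj n k B1 A' -> johnson_adj n k B2 A' ->
  A = A'.
Proof.
move=> B1V B2V AV A'V B12 a1 a2 a3 a4.
have key : forall X, X \in VCD k (a |: C) D -> johnson_adj n k B1 X -> johnson_adj n k B2 X ->
    val X = a |: (val B1 :&: val B2).
  move=> X XV h1 h2.
  have aX := aG2 XV.
  have s1 : val X :\ a \subset val B1 by apply: (cross_sub aX (aG1 B1V)); rewrite jsym.
  have s2 : val X :\ a \subset val B2 by apply: (cross_sub aX (aG1 B2V)); rewrite jsym.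
  have : val X :\ a == val B1 :&: val B2.
    rewrite eqEcard subsetI s1 s2 cardD1k //.
    exact: lt_pred (jdist B12).
  by move/eqP <-; rewrite setD1K.
by apply: val_inj; rewrite (key A) // (key A').
Qed.

Lemma cn2 n k C D a (A1 A2 B B' : johnson_vertex n k) :
  A1 \in VCD k (a |: C) D -> A2 \in VCD k (a |: C) D ->
  B \in VCD k C (D :\ a) -> B' \in VCD k C (D :\ a) -> A1 != A2 ->
  johnson_adj n k A1 B -> johnson_adj n k A2 B -> johnson_adj n k A1 B' -> johnson_adj n k A2 B' ->
  B = B'.
Proof.
move=> A1V A2V BV B'V A12 a1 a2 a3 a4.
have big : k <= #|(val A1 :\ a) :|: (val A2 :\ a)|.
  rewrite leqNgt; apply/negP => h.
  have e1 : val A1 :\ a == (val A1 :\ a) :|: (val A2 :\ a).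
    by rewrite eqEcard subsetUl cardD1k ?(aG2 A1V) //; exact: lt_pred h.
  have e2 : val A2 :\ a == (val A1 :\ a) :|: (val A2 :\ a).
    by rewrite eqEcard subsetUr cardD1k ?(aG2 A2V) //; exact: lt_pred h.
  have e3 : val A1 :\ a = val A2 :\ a by apply/eqP; rewrite (eqP e2); exact: e1.
  move: A12; rewrite -val_eqE -(setD1K (aG2 A1V)) -(setD1K (aG2 A2V)) e3.
  by rewrite eqxx.
have key : forall X, X \in VCD k C (D :\ a) -> johnson_adj n k A1 X -> johnson_adj n k A2 X ->
    val X = (val A1 :\ a) :|: (val A2 :\ a).
  move=> X XV h1 h2.
  have s1 := cross_sub (aG2 A1V) (aG1 XV) h1.
  have s2 := cross_sub (aG2 A2V) (aG1 XV) h2.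
  apply/esym/eqP; by rewrite eqEcard subUset s1 s2 jcard.
by apply: val_inj; rewrite (key B) // (key B').
Qed.

Lemma mkvK n k (d : johnson_vertex n k) (S : {set 'I_n}) :
  #|S| = k -> val (insubd d S) = S.
Proof. by move=> h; rewrite insubdK //; rewrite unfold_in /= h. Qed.

Lemma addpred k : 0 < k -> true + k.-1 = k.
Proof. by case: k. Qed.

Lemma deg1 n k (C D : {set 'I_n}) (a : 'I_n) (B : johnson_vertex n k) :
  a \in D -> B \in VCD k C (D :\ a) ->
  #|val B :\: C| <= #|[set z in VCD k (a |: C) D | johnson_adj n k B z]|.
Proof.
move=> aD BV; have aB := aG1 BV.
move: BV; rewrite inVCD => /andP [CB BD].
pose f i := insubd B (a |: (val B :\ i)).
have fv : forall i, i \in val B -> val (f i) = a |: (val B :\ i).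
  move=> i iB; apply: mkvK; rewrite cardsU1 (cardD1k iB) !inE negb_and negbK aB orbT.
  by apply: addpred; rewrite -(jcard B); apply/card_gt0P; exists i.
have inj : {in val B :\: C &, injective f}.
  move=> i i'; rewrite !inE => /andP [_ iB] /andP [_ i'B] e.
  apply/eqP; apply: contraT => ii.
  have := congr1 val e; rewrite (fv i iB) (fv i' i'B) => /setP /(_ i).
  rewrite !inE eqxx ii iB /= orbF orbT => /eqP ia; subst.
  by rewrite iB in aB.
rewrite -(card_in_imset inj); apply: subset_leq_card; apply/subsetP => z.
case/imsetP => i; rewrite inE => /andP [iC iB] ->.
rewrite inE inVCD (fv i iB); apply/andP; split; last first.
  rewrite /johnson_adj /= (fv i iB).
  have -> : val B :&: (a |: val B :\ i) = val B :\ i.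
    apply/setP => w; rewrite !inE; case: (boolP (w \in val B)) => wB; rewrite ?andbF ?andbT //.
    by case: (eqVneq w a) => [wa|//]; subst; rewrite wB in aB.
  by rewrite (cardD1k iB).
apply/andP; split.
  apply: setUS; apply/subsetP => w wC; rewrite !inE (subsetP CB w wC) andbT.
  by apply/eqP => e; subst; rewrite wC in iC.
rewrite subUset sub1set aD; apply: subset_trans (subsetDl _ _) _.
by apply: subset_trans BD _; apply: subsetDl.
Qed.

Lemma deg2 n k (C D : {set 'I_n}) (a : 'I_n) (A : johnson_vertex n k) :
  a \notin C -> A \in VCD k (a |: C) D ->
  #|D :\: val A| <= #|[set z in VCD k C (D :\ a) | johnson_adj n k A z]|.
Proof.
move=> aC AV; have aA := aG2 AV.
move: AV; rewrite inVCD => /andP [CA AD].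
have kp : 0 < k by rewrite -(jcard A); apply/card_gt0P; exists a.
pose g i := insubd A (i |: (val A :\ a)).
have gv : forall i, i \notin val A -> val (g i) = i |: (val A :\ a).
  move=> i iA; apply: mkvK; rewrite cardsU1 (cardD1k aA) !inE negb_and iA orbT.
  exact: addpred.
have inj : {in D :\: val A &, injective g}.
  move=> i i'; rewrite !inE => /andP [iA _] /andP [i'A _] e.
  apply/eqP; apply: contraT => ii.
  have := congr1 val e; rewrite (gv i iA) (gv i' i'A) => /setP /(_ i).
  by rewrite !inE eqxx (negbTE ii) (negbTE iA) andbF.
rewrite -(card_in_imset inj); apply: subset_leq_card; apply/subsetP => z.
case/imsetP => i; rewrite inE => /andP [iA iD] ->.
have ia : i != a by apply/eqP => e; subst; rewrite aA in iA.
rewrite inE inVCD (gv i iA); apply/andP; split; last first.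
  rewrite /johnson_adj /= (gv i iA).
  have -> : val A :&: (i |: val A :\ a) = val A :\ a.
    apply/setP => w; rewrite !inE; case: (boolP (w \in val A)) => wA; rewrite ?andbF ?andbT //.
    by case: (eqVneq w i) => [wi|//]; subst; rewrite wA in iA.
  by rewrite (cardD1k aA).
apply/andP; split.
  apply/subsetP => w wC; rewrite !inE.
  have wA : w \in val A by apply: (subsetP CA); rewrite inE wC orbT.
  rewrite wA andbT orbC; apply/orP; left; apply/eqP => e; subst; by rewrite wC in aC.
rewrite subUset sub1set !inE ia iD /=; apply/subsetP => w; rewrite !inE => /andP [-> /=].
exact: (subsetP AD).
Qed.

Definition mkv n k (S : {set 'I_n}) (h : #|S| == k) : johnson_vertex n k := exist _ S h.

Lemma card_dec n k (C D : {set 'I_n}) a :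
  #|VCD k C D| = #|VCD k C (D :\ a)| + #|VCD k (a |: C) D|.
Proof.
by rewrite (jdec k C D a) -cardsUI (disjoint_setI0 (jdec_dis k C D a)) cards0 addn0.
Qed.

Lemma pick_DC n (C D : {set 'I_n}) : C \subset D -> #|C| < #|D| -> exists2 a, a \in D & a \notin C.
Proof.
move=> CD lt; have : 0 < #|D :\: C| by rewrite (cardsDS CD) subn_gt0.
by case/card_gt0P => a; rewrite inE => /andP [aC aD]; exists a.
Qed.

Lemma jsize n k m : forall (C D : {set 'I_n}), C \subset D -> #|D| - #|C| = m ->
  #|C| < k -> k < #|D| -> m <= #|VCD k C D|.
Proof.
elim: m => [//|m IH] C D CD hm Ck kD.
have [a aD aC] := pick_DC CD (ltn_trans Ck kD).
case: (eqVneq k (#|C|.+1)) => [ek|ek1].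
  have h0 : #|a |: C| == k by rewrite cardsU1 aC ek.
  pose f d := insubd (mkv h0) (d |: C).
  have fv : forall d, d \notin C -> val (f d) = d |: C.
    by move=> d dC; apply: mkvK; rewrite cardsU1 dC ek.
  have inj : {in D :\: C &, injective f}.
    move=> d d'; rewrite !inE => /andP [dC _] /andP [d'C _] e.
    have := congr1 val e; rewrite (fv d dC) (fv d' d'C) => /setP /(_ d).
    by rewrite !inE eqxx (negbTE dC) !orbF => /esym /eqP.
  rewrite -hm -(cardsDS CD) -(card_in_imset inj); apply: subset_leq_card.
  apply/subsetP => z /imsetP [d]; rewrite inE => /andP [dC dD] ->.
  by rewrite inVCD (fv d dC) subsetUr subUset sub1set dD CD.
case: (eqVneq k (#|D|.-1)) => [ek|ek2].
  have h0 : #|D :\ a| == k by rewrite ek (cardsD1 a D) aD.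
  pose f d := insubd (mkv h0) (D :\ d).
  have hc : forall d, d \in D -> #|D :\ d| = k by move=> d dD; rewrite ek (cardsD1 d D) dD.
  have fv : forall d, d \in D -> val (f d) = D :\ d by move=> d dD; apply: mkvK; apply: hc.
  have inj : {in D :\: C &, injective f}.
    move=> d d'; rewrite !inE => /andP [dC dD] /andP [d'C d'D] e.
    have := congr1 val e; rewrite (fv d dD) (fv d' d'D) => /setP /(_ d).
    by rewrite !inE eqxx dD /= andbT => /esym /negbFE /eqP.
  rewrite -hm -(cardsDS CD) -(card_in_imset inj); apply: subset_leq_card.
  apply/subsetP => z /imsetP [d]; rewrite inE => /andP [dC dD] ->.
  rewrite inVCD (fv d dD) subsetDl andbT.
  apply/subsetP => w wC; rewrite !inE (subsetP CD w wC) andbT.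
  by apply/eqP => e; subst; rewrite wC in dC.
rewrite (card_dec k C D a).
have s1 : m <= #|VCD k C (D :\ a)|.
  apply: IH.
  - by apply/subsetP => w wC; rewrite !inE (subsetP CD w wC) andbT; apply/eqP => e; subst; rewrite wC in aC.
  - by move: hm; rewrite (cardsD1 a D) aD; lia.
  - done.
  - by move: kD ek2; rewrite (cardsD1 a D) aD /=; lia.
have s2 : m <= #|VCD k (a |: C) D|.
  apply: IH.
  - by rewrite subUset sub1set aD CD.
  - by move: hm; rewrite cardsU1 aC; lia.
  - by move: Ck ek1; rewrite cardsU1 aC; lia.
  - done.
lia.
Qed.

Lemma complete1 n k (C D : {set 'I_n}) (w z : johnson_vertex n k) :
  k = #|C|.+1 -> w \in VCD k C D -> z \in VCD k C D -> w != z -> johnson_adj n k w z.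
Proof.
move=> ek; rewrite !inVCD => /andP [Cw _] /andP [Cz _] wz.
rewrite jadjE eqn_leq (lt_pred (jdist wz)) /=.
have -> : k.-1 = #|C| by rewrite ek.
by apply: subset_leq_card; rewrite subsetI Cw Cz.
Qed.

Lemma complete2 n k (C D : {set 'I_n}) (w z : johnson_vertex n k) :
  k = #|D|.-1 -> 0 < k -> w \in VCD k C D -> z \in VCD k C D -> w != z -> johnson_adj n k w z.
Proof.
move=> ek kp; rewrite !inVCD => /andP [_ wD] /andP [_ zD] wz.
rewrite jadjE eqn_leq (lt_pred (jdist wz)) /=.
have h1 : #|val w :|: val z| <= #|D| by apply: subset_leq_card; rewrite subUset wD zD.
have h2 := cardsUI (val w) (val z); rewrite !jcard in h2.
move: h1 h2 kp ek; move: (#|val w :|: val z|) (#|val w :&: val z|) (#|D|) => a b c.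
lia.
Qed.

Lemma comat4 n k (C D : {set 'I_n}) :
  #|D| = #|C| + 4 -> k = #|C| + 2 -> C \subset D -> comat (johnson_adj n k) (VCD k C D).
Proof.
move=> eD ek CD.
have key : forall w z : johnson_vertex n k, w \in VCD k C D -> z \in VCD k C D -> w != z ->
    ~~ johnson_adj n k w z -> val z = C :|: (D :\: val w).
  move=> w z; rewrite !inVCD => /andP [Cw wD] /andP [Cz zD] wz nwz.
  have hI : C = val w :&: val z.
    apply/eqP; rewrite eqEcard subsetI Cw Cz andTb.
    move: nwz (jdist wz) ek; rewrite jadjE; move: (#|val w :&: val z|) => c; lia.
  have sub : val z \subset C :|: (D :\: val w).
    apply/subsetP => x xz; rewrite !inE (subsetP zD x xz) andbT.
    case: (boolP (x \in val w)) => xw; last by rewrite orbT.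
    by rewrite hI inE xw xz.
  apply/eqP; rewrite eqEcard sub jcard /=.
  apply: leq_trans (leq_card_setU _ _) _.
  rewrite (cardsDS wD) jcard eD; move: ek; lia.
move=> w z z' wV zV z'V wz wz' nz nz'.
by apply: val_inj; rewrite (key w z) // (key w z').
Qed.

Lemma comat_complete (T : finType) (adj : rel T) (V : {set T}) :
  (forall w z, w \in V -> z \in V -> w != z -> adj w z) -> comat adj V.
Proof. by move=> hc w z z' wV zV z'V wz _ nz; rewrite hc in nz. Qed.

Lemma xnb_of (T : finType) (adj : rel T) (V1 V2 : {set T}) :
  (forall w, w \in V1 -> 2 <= #|[set z in V2 | adj w z]|) -> xnb adj V1 V2.
Proof.
move=> h w wV y; case: (@pick_out _ [set z in V2 | adj w z] [:: y]) => [|z]; first exact: h.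
by rewrite !inE => /andP [zV a] zy; exists z => //; rewrite zy.
Qed.

Lemma jmain n k m : forall C D : {set 'I_n}, C \subset D -> #|D| - #|C| = m -> 4 <= m ->
  #|C| < k -> k < #|D| ->
  HCo (johnson_adj n k) (VCD k C D) /\ P2o (johnson_adj n k) (VCD k C D).
Proof.
have sym := @jsym n k.
elim: m => [//|m IH] C D CD hm m4 Ck kD.
have s4 : 4 <= #|VCD k C D| by apply: leq_trans m4 (jsize CD hm Ck kD).
case: (eqVneq k (#|C|.+1)) => [ek|ek1].
  have hc : forall w z, w \in VCD k C D -> z \in VCD k C D -> w != z -> johnson_adj n k w z.
    by move=> w z; apply: complete1.
  split; [apply: baseHC => //|apply: baseP2 => //]; by [apply: comat_complete | left].
case: (eqVneq k (#|D|.-1)) => [ek|ek2].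
  have hc : forall w z, w \in VCD k C D -> z \in VCD k C D -> w != z -> johnson_adj n k w z.
    by move=> w z; apply: complete2 => //; apply: leq_ltn_trans Ck.
  split; [apply: baseHC => //|apply: baseP2 => //]; by [apply: comat_complete | left].
have [a aD aC] := pick_DC CD (ltn_trans Ck kD).
have CDa : C \subset D :\ a.
  by apply/subsetP => w wC; rewrite !inE (subsetP CD w wC) andbT; apply/eqP => e; subst; rewrite wC in aC.
have CaD : a |: C \subset D by rewrite subUset sub1set aD CD.
have eDa : #|D :\ a| = #|D|.-1 by rewrite (cardsD1 a D) aD.
have eCa : #|a |: C| = #|C|.+1 by rewrite cardsU1 aC.
have hm1 : #|D :\ a| - #|C| = m by rewrite eDa; move: hm; lia.
have hm2 : #|D| - #|a |: C| = m by rewrite eCa; move: hm; lia.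
have k1 : k < #|D :\ a| by rewrite eDa; move: kD ek2; lia.
have k2 : #|a |: C| < k by rewrite eCa; move: Ck ek1; lia.
have sz1 := jsize CDa hm1 Ck k1.
have sz2 := jsize CaD hm2 k2 kD.
case: (eqVneq m 3) => [e3|m3].
  subst m.
  have c4 := @comat4 n k C D.
  have hc := c4 (_ : #|D| = #|C| + 4) (_ : k = #|C| + 2) CD.
  have cm : comat (johnson_adj n k) (VCD k C D).
    by apply: hc; move: hm Ck kD ek1 ek2; lia.
  have s6 : 6 <= #|VCD k C D| by rewrite (card_dec k C D a); move: sz1 sz2; lia.
  split; [apply: baseHC => //|apply: baseP2 => //]; by right.
have m4' : 4 <= m by move: m4 m3; lia.
have [h1 p1] := IH _ _ CDa hm1 m4' Ck k1.
have [h2 p2] := IH _ _ CaD hm2 m4' k2 kD.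
rewrite (jdec k C D a); apply: join => //.
- exact: jdec_dis.
- exact: leq_trans m4' sz1.
- exact: leq_trans m4' sz2.
- apply: xnb_of => B BV; apply: leq_trans (deg1 aD BV).
  move: BV; rewrite inVCD => /andP [CB _]; rewrite (cardsDS CB) jcard.
  by move: Ck ek1; lia.
- apply: xnb_of => A AV; apply: leq_trans (deg2 aC AV).
  move: AV; rewrite inVCD => /andP [_ AD]; rewrite (cardsDS AD) jcard.
  by move: kD ek2; lia.
- case: (leqP 3 (k - #|C|)) => hj.
    have hd : forall z, z \in VCD k C (D :\ a) ->
        3 <= #|[set w in VCD k (a |: C) D | johnson_adj n k z w]|.
      move=> B BV; apply: leq_trans (deg1 aD BV).
      by move: BV; rewrite inVCD => /andP [CB _]; rewrite (cardsDS CB) jcard.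
    have hcn := fun z1 z2 w w' z1V z2V z12 wV w'V => @cn1 n k C D a z1 z2 w w' z1V z2V wV w'V z12.
    exact: (mprop_sym sym (mprop_of sym hd hcn (leq_trans m4' sz1))).
  have hd : forall z, z \in VCD k (a |: C) D ->
      3 <= #|[set w in VCD k C (D :\ a) | johnson_adj n k z w]|.
    move=> A AV; apply: leq_trans (deg2 aC AV).
    move: AV; rewrite inVCD => /andP [_ AD]; rewrite (cardsDS AD) jcard.
    by move: hm hj; lia.
  have hcn := fun z1 z2 w w' z1V z2V z12 wV w'V => @cn2 n k C D a z1 z2 w w' z1V z2V wV w'V z12.
  exact: (mprop_of sym hd hcn (leq_trans m4' sz2)).
Qed.

Theorem theorem4 (n k : nat) :
  4 <= n -> 1 <= k -> k < n -> paired_2_coverable (johnson_adj n k).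
Proof.
move=> n4 k1 kn u v x y uq.
have eT : #|[set: 'I_n]| = n by rewrite cardsT card_ord.
have h1 : #|[set: 'I_n]| - #|@set0 'I_n| = n by rewrite eT cards0 subn0.
have h2 : #|@set0 'I_n| < k by rewrite cards0.
have h3 : k < #|[set: 'I_n]| by rewrite eT.
have [_ hP] := @jmain n k n set0 setT (sub0set _) h1 n4 h2 h3.
have inV : forall w : johnson_vertex n k, w \in VCD k set0 setT by move=> w; rewrite inVCD sub0set subsetT.
case: (hP u v x y (inV u) (inV v) (inV x) (inV y) uq) => P [Q [hP' hQ d c]].
by exists P, Q; split => // w; rewrite c inV.
Qed.
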